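(* Let $A$ be a normed PI-algebra over $F\in\{\mathbb{R},\mathbb{C}\}$. If its completion $C(A)$ is nil, then $A$ is nilpotent.
   Context: All algebras are non-unitary associative over $F$. A normed algebra has a norm with $\|ab\|\le\|a\|\|b\|$; $C(A)$ is its completion as a Banach algebra. $A$ is a PI-algebra if it satisfies a nonzero polynomial identity, i.e. there is a nonzero $f(x_1,\dots,x_m)$ in the free non-unitary associative algebra $F\langle x_1,x_2,\dots\rangle$ with $f(a_1,\dots,a_m)=0$ for all $a_i\in A$. An algebra is nil if every element is nilpotent, and nilpotent if there is $n$ with $a_1a_2\cdots a_n=0$ for all $a_1,\dots,a_n$ in it. *)

(* Defs.v *)
From HB Require Import structures.
From mathcomp Require Import all_boot all_order all_algebra.
From mathcomp Require Import all_classical all_reals all_analysis.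
From mathcomp Require Import complex.
Set Implicit Arguments. Unset Strict Implicit. Unset Printing Implicit Defensive.
Import Order.TTheory GRing.Theory Num.Theory.
Import numFieldNormedType.Exports.
Local Open Scope ring_scope.
Local Open Scope classical_set_scope.

Definition scalarF (R : realType) (is_complex : bool) : numFieldType :=
  if is_complex then ((R[i])%C : numFieldType) else (R : numFieldType).

Section Alg.
Variables (K : numFieldType) (A : normedModType K).

(* Product of a nonempty list a_1 ... a_n (left-associated; the empty list is
   sent to 0, but is never used). *)
Definition nprod (mul : A -> A -> A) (s : seq A) : A :=
  if s is x :: t then foldl mul x t else 0.

(* x^(n+1) for a non-unital multiplication *)
Definition npow (mul : A -> A -> A) (x : A) (n : nat) : A := iter n (mul x) x.

Definition is_normed_algebra (mul : A -> A -> A) : Prop :=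
  [/\ (forall (k : K) x y z, mul (k *: x + y) z = k *: mul x z + mul y z),
      (forall (k : K) x y z, mul x (k *: y + z) = k *: mul x y + mul x z),
      (forall x y z, mul x (mul y z) = mul (mul x y) z) &
      (forall x y, `|mul x y| <= `|x| * `|y|)].

Definition is_nil (mul : A -> A -> A) : Prop :=
  forall x : A, exists n : nat, npow mul x n = 0.

Definition is_nilpotent (mul : A -> A -> A) : Prop :=
  exists n : nat, forall s : seq A, size s = n.+1 -> nprod mul s = 0.

(* An element of the free non-unital associative algebra K<x_0, x_1, ...> is
   represented canonically by a finite list of pairs (w, c) of pairwise
   distinct nonempty words w (sequences of variable indices) with coefficients
   c; it is the formal sum of the c * w. *)
Definition eval_word (mul : A -> A -> A) (a : nat -> A) (w : seq nat) : A :=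
  nprod mul (map a w).

Definition eval_ncpoly (mul : A -> A -> A) (f : seq (seq nat * K)) (a : nat -> A)
  : A := \sum_(t <- f) t.2 *: eval_word mul a t.1.

Definition is_ncpoly (f : seq (seq nat * K)) : Prop :=
  uniq (map fst f) /\ all (fun t => t.1 != [::]) f.

Definition ncpoly_nonzero (f : seq (seq nat * K)) : Prop :=
  has (fun t => t.2 != 0) f.

Definition is_PI (mul : A -> A -> A) : Prop :=
  exists f : seq (seq nat * K), [/\ is_ncpoly f, ncpoly_nonzero f &
    forall a : nat -> A, eval_ncpoly mul f a = 0].

End Alg.

Definition is_completion (K : numFieldType) (A : normedModType K)
  (B : completeNormedModType K) (mulA : A -> A -> A) (mulB : B -> B -> B)
  (j : A -> B) : Prop :=
  [/\ (forall (k : K) x y, j (k *: x + y) = k *: j x + j y),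
      (forall x y, j (mulA x y) = mulB (j x) (j y)),
      (forall x, `|j x| = `|x|) &
      closure (range j) = setT].

(* Main.v *)
Require Import Defs.
From HB Require Import structures.
From mathcomp Require Import all_boot all_order all_algebra.
From mathcomp Require Import all_classical all_reals all_analysis.
From mathcomp Require Import ring complex.
Import Order.TTheory GRing.Theory Num.Theory.
Import numFieldNormedType.Exports.
Local Open Scope ring_scope.
Local Open Scope classical_set_scope.
Set Implicit Arguments. Unset Strict Implicit. Unset Printing Implicit Defensive.
Section AlgBasic.
Variables (K : numFieldType) (V : normedModType K) (mul : V -> V -> V).
Hypotheses (mulDl : forall (k : K) x y z, mul (k *: x + y) z = k *: mul x z + mul y z)
  (mulDr : forall (k : K) x y z, mul x (k *: y + z) = k *: mul x y + mul x z)
  (mulA : forall x y z, mul x (mul y z) = mul (mul x y) z).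

Lemma mul0l z : mul 0 z = 0.
Proof.
have := mulDl (-1) z z z. rewrite scaleN1r addNr => ->.
by rewrite scaleN1r addNr.
Qed.
Lemma mul0r z : mul z 0 = 0.
Proof.
have := mulDr (-1) z z z. rewrite scaleN1r addNr => ->.
by rewrite scaleN1r addNr.
Qed.
Lemma mulDl' x y z : mul (x + y) z = mul x z + mul y z.
Proof. by have := mulDl 1 x y z; rewrite !scale1r. Qed.
Lemma mulDr' x y z : mul z (x + y) = mul z x + mul z y.
Proof. by have := mulDr 1 z x y; rewrite !scale1r. Qed.
Lemma mulZl k x z : mul (k *: x) z = k *: mul x z.
Proof. by have := mulDl k x 0 z; rewrite !addr0 mul0l addr0. Qed.
Lemma mulZr k x z : mul z (k *: x) = k *: mul z x.
Proof. by have := mulDr k z x 0; rewrite !addr0 mul0r addr0. Qed.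
Lemma mul_suml I (r : seq I) (P : pred I) (F : I -> V) z :
  mul (\sum_(i <- r | P i) F i) z = \sum_(i <- r | P i) mul (F i) z.
Proof. exact: (big_morph (fun u => mul u z) (fun a b => mulDl' a b z) (mul0l z)). Qed.
Lemma mul_sumr I (r : seq I) (P : pred I) (F : I -> V) z :
  mul z (\sum_(i <- r | P i) F i) = \sum_(i <- r | P i) mul z (F i).
Proof. exact: (big_morph (fun u => mul z u) (fun a b => mulDr' a b z) (mul0r z)). Qed.

Definition lp x i w := iter i (mul x) w.
Definition rp w y i := iter i (fun u => mul u y) w.
Definition np x i := npow mul x i.

Lemma lpD x i u v : lp x i (u + v) = lp x i u + lp x i v.
Proof. by elim: i => //= i ->; rewrite mulDr'. Qed.
Lemma lp0 x i : lp x i 0 = 0.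
Proof. by elim: i => //= i ->; rewrite mul0r. Qed.
Lemma lpZ x i k u : lp x i (k *: u) = k *: lp x i u.
Proof. by elim: i => //= i ->; rewrite mulZr. Qed.
Lemma rpD y i u v : rp (u + v) y i = rp u y i + rp v y i.
Proof. by elim: i => //= i ->; rewrite mulDl'. Qed.
Lemma rp0 y i : rp 0 y i = 0.
Proof. by elim: i => //= i ->; rewrite mul0l. Qed.
Lemma rpZ y i k u : rp (k *: u) y i = k *: rp u y i.
Proof. by elim: i => //= i ->; rewrite mulZl. Qed.
Lemma lp_sum x i I (r : seq I) (P : pred I) (F : I -> V) :
  lp x i (\sum_(j <- r | P j) F j) = \sum_(j <- r | P j) lp x i (F j).
Proof. exact: (big_morph (lp x i) (lpD x i) (lp0 x i)). Qed.
Lemma rp_sum y i I (r : seq I) (P : pred I) (F : I -> V) :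
  rp (\sum_(j <- r | P j) F j) y i = \sum_(j <- r | P j) rp (F j) y i.
Proof. exact: (big_morph (fun u => rp u y i) (fun a b => rpD y i a b) (rp0 y i)). Qed.

Lemma npS x i : np x i.+1 = mul x (np x i).
Proof. by []. Qed.
Lemma npSr x i : np x i.+1 = mul (np x i) x.
Proof.
elim: i => [//|i IH].
rewrite [LHS]npS [in LHS]IH mulA; by [].
Qed.
Lemma lp_np x i w : lp x i.+1 w = mul (np x i) w.
Proof.
elim: i => // i IH.
change (mul x (lp x i.+1 w) = mul (np x i.+1) w).
by rewrite IH mulA.
Qed.
Lemma rp_np y i w : rp w y i.+1 = mul w (np y i).
Proof.
elim: i => // i IH.
change (mul (rp w y i.+1) y = mul w (np y i.+1)).
by rewrite IH -mulA -npSr.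
Qed.
Lemma lp_lp x i k w : lp x i (lp x k w) = lp x (i + k) w.
Proof. by rewrite /lp iterD. Qed.
Lemma rp_rp y i k w : rp (rp w y k) y i = rp w y (i + k).
Proof. by rewrite /rp iterD. Qed.
Lemma mul_rp u w y j : mul u (rp w y j) = rp (mul u w) y j.
Proof. by rewrite /rp; elim: j => //= j IH; rewrite mulA IH. Qed.
Lemma mul_lp u w x i : mul (lp x i w) u = lp x i (mul w u).
Proof. by rewrite /lp; elim: i => //= i IH; rewrite -mulA IH. Qed.
Lemma lp_rp x i y j w : lp x i (rp w y j) = rp (lp x i w) y j.
Proof.
elim: i => // i IH.
change (mul x (lp x i (rp w y j)) = rp (mul x (lp x i w)) y j).
by rewrite IH mul_rp.
Qed.
Lemma rp_mul z y j v : mul (rp z y j) v = mul z (lp y j v).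
Proof.
elim: j v => // j IH v.
change (mul (mul (rp z y j) y) v = mul z (lp y j.+1 v)).
by rewrite -mulA IH /lp iterSr.
Qed.

Definition Fl n x w := \sum_(i < n) lp x i (rp w x (n.-1 - i)).

Lemma FlS n x w : Fl n.+1 x w = rp w x n + mul x (Fl n x w).
Proof.
rewrite /Fl big_ord_recl /= subn0 mul_sumr; congr (_ + _).
apply: eq_bigr => i _; rewrite /bump /= add1n /=.
by case: n i => [[]//|n] i; rewrite subSS.
Qed.

Definition is_ideal (I : V -> Prop) :=
  [/\ I 0, (forall u v, I u -> I v -> I (u + v)), (forall k u, I u -> I (k *: u)),
      (forall u w, I u -> I (mul w u)) & (forall u w, I u -> I (mul u w))].

Lemma ideal_sum (I : V -> Prop) J (r : seq J) (P : pred J) (F : J -> V) :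
  is_ideal I -> (forall j, P j -> I (F j)) -> I (\sum_(j <- r | P j) F j).
Proof. by case=> I0 ID _ _ _ HF; apply: big_ind => //. Qed.
Lemma ideal_lp (I : V -> Prop) x i u : is_ideal I -> I u -> I (lp x i u).
Proof. by case=> _ _ _ IL _ Iu; elim: i => //= i IH; apply: IL. Qed.
Lemma ideal_rp (I : V -> Prop) y i u : is_ideal I -> I u -> I (rp u y i).
Proof. by case=> _ _ _ _ IR Iu; elim: i => //= i IH; apply: IR. Qed.

Lemma higman (I : V -> Prop) p : is_ideal I ->
  (forall x w, I (Fl p.+2 x w)) ->
  forall x z y, I (mul (mul (np x p) z) (np y p)).
Proof.
move=> hI hF x z y.
set n := p.+2.
pose S := \sum_(j < n) rp (Fl n x (rp z y j)) y (n.-1 - j).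
have IS : I S by apply: ideal_sum => // j _; apply: ideal_rp.
have eS : S = \sum_(i < n) lp x i
    (\sum_(j < n) rp (rp (rp z y j) x (n.-1 - i)) y (n.-1 - j)).
  rewrite /S /Fl.
  under eq_bigr do rewrite rp_sum.
  rewrite exchange_big /=; apply: eq_bigr => i _.
  rewrite lp_sum; apply: eq_bigr => j _; by rewrite [RHS]lp_rp.
have inner (i : 'I_n) : (i < n.-1)%N ->
    \sum_(j < n) rp (rp (rp z y j) x (n.-1 - i)) y (n.-1 - j)
    = mul z (Fl n y (np x (n.-1 - i).-1)).
  move=> lti; rewrite /Fl mul_sumr; apply: eq_bigr => j _.
  have -> : (n.-1 - i = (n.-1 - i).-1.+1)%N by rewrite prednK // subn_gt0.
  by rewrite rp_np rp_mul -mul_rp -lp_rp.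
have last : \sum_(j < n) rp (rp (rp z y j) x (n.-1 - n.-1)) y (n.-1 - j)
    = n%:R *: rp z y n.-1.
  have e (j : 'I_n) : (n.-1 - j + j = n.-1)%N by rewrite subnK // -ltnS.
  rewrite subnn /=; under eq_bigr => j _ do rewrite rp_rp e.
  by rewrite sumr_const card_ord scaler_nat.
pose G (i : nat) := \sum_(j < n) rp (rp (rp z y j) x (n.-1 - i)) y (n.-1 - j).
have split : S = (\sum_(i < n.-1) lp x i (G i)) + n%:R *: lp x n.-1 (rp z y n.-1).
  rewrite eS big_ord_recr; congr (_ + _).
  by rewrite -lpZ -last.
have I1 : I (\sum_(i < n.-1) lp x i (G i)).
  apply: ideal_sum => // i _; apply: ideal_lp => //.
  rewrite /G (inner (widen_ord (leqnSn _) i)); last by rewrite /= ltn_ord.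
  by case: hI => _ _ _ IL _; apply: IL; apply: hF.
have I2 : I (n%:R *: lp x n.-1 (rp z y n.-1)).
  have -> : n%:R *: lp x n.-1 (rp z y n.-1) = (-1) *: (\sum_(i < n.-1) lp x i (G i)) + S.
    by rewrite split addrA scaleN1r addNr add0r.
  by case: hI => _ ID IZ _ _; apply: ID; [apply: IZ; exact: I1 | exact: IS].
have I3 : I (lp x n.-1 (rp z y n.-1)).
  have -> : lp x n.-1 (rp z y n.-1) = (n%:R)^-1 *: (n%:R *: lp x n.-1 (rp z y n.-1)).
    by rewrite scalerA mulVf ?scale1r // pnatr_eq0.
  by case: hI => _ _ IZ _ _; apply: IZ.
change (I (lp x p.+1 (rp z y p.+1))) in I3.
by move: I3; rewrite lp_np rp_np mulA.
Qed.


Fixpoint coef x y m k : V := match m with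
 | 0 => match k with 0 => x | 1 => y | _ => 0 end
 | m'.+1 => mul x (coef x y m' k) + (if k is k'.+1 then mul y (coef x y m' k') else 0)
 end.

Lemma coef_vanish x y m k : (m.+1 < k)%N -> coef x y m k = 0.
Proof.
elim: m k => [|m IH] k hk; first by case: k hk => [|[|k]].
case: k hk => [//|k] hk /=.
by rewrite !IH ?mul0r ?addr0 // ltnW.
Qed.
Lemma coef_top x y m : coef x y m m.+1 = np y m.
Proof.
elim: m => [//|m IH] /=.
by rewrite coef_vanish // mul0r add0r IH.
Qed.
Lemma coef_zero x y m : coef x y m 0 = np x m.
Proof. by elim: m => [//|m IH] /=; rewrite addr0 IH. Qed.
Lemma coef_one x y m : coef x y m 1 = Fl m.+1 x y.
Proof.
elim: m => [|m IH].
  by rewrite FlS /Fl big_ord0 mul0r addr0.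
rewrite [LHS]/= IH coef_zero [RHS]FlS rp_np addrC.
by [].
Qed.

Lemma expand x y (t : K) m :
  np (x + t *: y) m = \sum_(l < m.+2) t ^+ l *: coef x y m l.
Proof.
elim: m => [|m IH].
  by rewrite !big_ord_recl big_ord0 /= expr0 scale1r expr1 addr0.
rewrite npS IH mulDl' mulZl !mul_sumr.
have -> : \sum_(l < m.+3) t ^+ l *: coef x y m.+1 l =
   \sum_(l < m.+3) t ^+ l *: mul x (coef x y m l) +
   \sum_(l < m.+3) t ^+ l *: (if (l : nat) is k'.+1 then mul y (coef x y m k') else 0).
  by rewrite -big_split; apply: eq_bigr => l _ /=; rewrite scalerDr.
congr (_ + _).
  rewrite [RHS]big_ord_recr /= coef_vanish // mul0r scaler0 addr0.
  by apply: eq_bigr => l _; rewrite mulZr.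
rewrite [RHS]big_ord_recl /= scaler0 add0r scaler_sumr.
apply: eq_bigr => l _; rewrite /bump add0n add1n mulZr scalerA exprS.
by [].
Qed.

Lemma extract (I : V -> Prop) n (c : nat -> V) (t : 'I_n.+1 -> K) :
  is_ideal I -> injective t ->
  (forall i, I (\sum_(l < n.+1) t i ^+ l *: c l)) ->
  forall k, (k <= n)%N -> I (c k).
Proof.
move=> hI tinj hQ k kn.
pose M : 'M[K]_n.+1 := \matrix_(l, i) t i ^+ l.
have uM : M \in unitmx.
  rewrite unitmxE unitfE.
  have -> : M = Vandermonde n.+1 (\row_i t i) by apply/matrixP => l i; rewrite !mxE.
  rewrite det_Vandermonde; apply/prodf_neq0 => i _; apply/prodf_neq0 => j ij.
  rewrite !mxE subr_eq0; apply/eqP => /tinj eij; move: ij; rewrite eij ltnn.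
  by [].
pose W := invmx M.
pose k' : 'I_n.+1 := inord k.
have e : c k = \sum_i W i k' *: (\sum_(l < n.+1) t i ^+ l *: c l).
  under eq_bigr do rewrite scaler_sumr.
  rewrite exchange_big /=.
  have e1 (l : 'I_n.+1) : \sum_(i < n.+1) W i k' *: (t i ^+ l *: c l) = (M *m W) l k' *: c l.
    rewrite mxE scaler_suml; apply: eq_bigr => i _; rewrite scalerA mxE mulrC.
    by [].
  under eq_bigr do rewrite e1.
  rewrite mulmxV // (bigD1 k') //= mxE eqxx mulr1n scale1r big1 ?addr0.
    by rewrite inordK.
  by move=> l /negbTE hl; rewrite mxE hl mulr0n scale0r.
rewrite e; case: hI => I0 ID IZ _ _.
by apply: big_ind => // i _; apply: IZ.
Qed.

Lemma linearize (I : V -> Prop) p : is_ideal I -> (forall z, I (np z p.+1)) ->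
  forall x w, I (Fl p.+2 x w).
Proof.
move=> hI hz x w; rewrite -coef_one.
apply: (@extract I p.+2 (coef x w p.+1) (fun i => (i : nat)%:R)) => //.
  by move=> i j /eqP; rewrite eqr_nat => /eqP /val_inj.
by move=> i; rewrite -expand.
Qed.

Fixpoint Ln p := if p is p'.+1 then (Ln p').*2.+1 else 1%N.
Lemma Ln_gt0 p : (0 < Ln p)%N. Proof. by case: p. Qed.

Lemma foldl_mul a y s : foldl mul a (y :: s) = mul a (foldl mul y s).
Proof.
elim: s a y => [//|u s IH] a y /=.
have h1 := IH (mul a y) u; have h2 := IH y u; rewrite /= in h1 h2.
by rewrite h1 h2 mulA.
Qed.

Lemma nprod_split s1 z s2 : s1 != [::] -> s2 != [::] ->
  nprod mul (s1 ++ z :: s2) = mul (mul (nprod mul s1) z) (nprod mul s2).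
Proof.
case: s1 => // a t1; case: s2 => // b t2 _ _ /=.
by rewrite foldl_cat foldl_mul foldl_mul mulA.
Qed.

Lemma NH p : forall I : V -> Prop, is_ideal I -> (forall z, I (np z p)) ->
  forall s, size s = Ln p -> I (nprod mul s).
Proof.
elim: p => [|p IH] I hI hz s hs.
  by case: s hs => [|a [|]] // _; exact: hz a.
have [I0 ID IZ IL IR] := hI.
pose J u := forall z y, I (mul (mul u z) (np y p)).
have hJ : is_ideal J.
  split.
  - by move=> z y; rewrite !mul0l.
  - by move=> u v hu hv z y; rewrite !mulDl'; apply: ID.
  - by move=> k u hu z y; rewrite !mulZl; apply: IZ.
  - by move=> u w hu z y; rewrite -!mulA; apply: IL; rewrite mulA.
  - by move=> u w hu z y; rewrite -(mulA u w z); apply: hu.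
have hzJ : forall z, J (np z p).
  move=> z z' y; apply: higman => //; exact: linearize.
have HJ := IH J hJ hzJ.
pose J' v := forall s z, size s = Ln p -> I (mul (mul (nprod mul s) z) v).
have hJ' : is_ideal J'.
  split.
  - by move=> s' z _; rewrite mul0r.
  - by move=> u v hu hv s' z h; rewrite mulDr'; apply: ID; [apply: hu | apply: hv].
  - by move=> k u hu s' z h; rewrite mulZr; apply: IZ; apply: hu.
  - by move=> u w hu s' z h; rewrite mulA -(mulA _ z w); apply: hu.
  - by move=> u w hu s' z h; rewrite mulA; apply: IR; apply: hu.
have hzJ' : forall y, J' (np y p) by move=> y s' z h; apply: HJ.
have HJ' := IH J' hJ' hzJ'.
have hsz : (Ln p <= size s)%N by rewrite hs /= -addnn -addSn leq_addl.
rewrite -(cat_take_drop (Ln p) s).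
case e: (drop (Ln p) s) => [|z s2].
  by move: (size_drop (Ln p) s); rewrite e hs /= -addnn -addSn addnK.
have hs2 : size s2 = Ln p.
  by move: (size_drop (Ln p) s); rewrite e hs /= -addnn -addSn addnK => -[].
have ht : size (take (Ln p) s) = Ln p by rewrite size_takel.
rewrite nprod_split; first by apply: HJ'.
  by rewrite -size_eq0 ht -lt0n Ln_gt0.
by rewrite -size_eq0 hs2 -lt0n Ln_gt0.
Qed.

Lemma ideal0 : is_ideal (fun v => v = 0).
Proof.
split => //.
- by move=> u v -> ->; rewrite addr0.
- by move=> k u ->; rewrite scaler0.
- by move=> u w ->; rewrite mul0r.
- by move=> u w ->; rewrite mul0l.
Qed.

End AlgBasic.
Section AnalBasic.
Variables (K : numFieldType) (V : normedModType K) (mul : V -> V -> V).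
Hypotheses (mulDl : forall (k : K) x y z, mul (k *: x + y) z = k *: mul x z + mul y z)
  (mulDr : forall (k : K) x y z, mul x (k *: y + z) = k *: mul x y + mul x z)
  (mulA : forall x y z, mul x (mul y z) = mul (mul x y) z)
  (mulN : forall x y, `|mul x y| <= `|x| * `|y|).

Lemma mulBr' x u v : mul x (u - v) = mul x u - mul x v.
Proof. by have := mulDr (-1) x v u; rewrite !scaleN1r addrC => ->; rewrite addrC. Qed.
Lemma mulBl' x u v : mul (u - v) x = mul u x - mul v x.
Proof. by have := mulDl (-1) v u x; rewrite !scaleN1r addrC => ->; rewrite addrC. Qed.

Lemma np_norm b m : `|np mul b m| <= (`|b| + 1) ^+ m.+1.
Proof.
elim: m => [|m IH]; first by rewrite expr1 lerDl.
rewrite npS exprS; apply: (le_trans (mulN _ _)).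
by apply: ler_pM => //; rewrite lerDl.
Qed.

Lemma np_bound x b m : `|x - b| <= 1 ->
  `|np mul x m - np mul b m| <= `|x - b| * (m.+1%:R * (`|b| + 1) ^+ m).
Proof.
move=> d1; set d := `|x - b|; set be := `|b| + 1.
have hx : `|x| <= be.
  have -> : x = b + (x - b) by rewrite addrC subrK.
  by apply: (le_trans (ler_normD _ _)); rewrite lerD2l.
have be0 : 0 <= be by rewrite addr_ge0.
elim: m => [|m IH]; first by rewrite expr0 mulr1 mulr1.
have -> : np mul x m.+1 - np mul b m.+1 =
    mul x (np mul x m - np mul b m) + mul (x - b) (np mul b m).
  by rewrite !npS mulBr' mulBl' addrA subrK.
apply: (le_trans (ler_normD _ _)).
apply: (le_trans (lerD (mulN _ _) (mulN _ _))).
have h1 : `|x| * `|np mul x m - np mul b m| <= be * (d * (m.+1%:R * be ^+ m)).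
  by apply: ler_pM.
have h2 : `|x - b| * `|np mul b m| <= d * be ^+ m.+1.
  by apply: ler_pM => //; exact: np_norm.
apply: (le_trans (lerD h1 h2)).
rewrite le_eqVlt; apply/orP; left; apply/eqP.
rewrite exprS -[m.+2]addn1 natrD; ring.
Qed.

Lemma np_open b m : np mul b m != 0 ->
  exists s, 0 < s /\ forall x, `|x - b| < s -> np mul x m != 0.
Proof.
move=> nb; set c := `|np mul b m|; set C := m.+1%:R * (`|b| + 1) ^+ m.
have c0 : 0 < c by rewrite normr_gt0.
have C0 : 0 < C by rewrite mulr_gt0 // exprn_gt0 // ltr_wpDl.
have Cc0 : 0 < C + c by rewrite addr_gt0.
exists (c / (C + c)); split; first by rewrite divr_gt0.
move=> x hx; apply/eqP => hx0.
have s1 : c / (C + c) <= 1 by rewrite ler_pdivrMr // mul1r lerDr ltW.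
have d1 : `|x - b| <= 1 by apply: (le_trans (ltW hx)).
have := @np_bound x b m d1; rewrite hx0 sub0r normrN -/c -/C => hb.
have : `|x - b| * C < c / (C + c) * C by rewrite ltr_pM2r.
have : c / (C + c) * C < c.
  by rewrite mulrAC ltr_pdivrMr // ltr_pM2l // ltrDl.
move=> h3 h4; have := le_lt_trans hb (lt_trans h4 h3).
by rewrite ltxx.
Qed.

End AnalBasic.
Section MyBaire.
Variables (K : numFieldType) (B : completeNormedModType K).
Hypothesis archK : forall e : K, 0 < e -> exists M : nat, (M.+1%:R)^-1 < e.

Definition mymin (a b : K) := if a <= b then a else b.
Lemma mymin_l a b : 0 < a -> 0 < b -> mymin a b <= a.
Proof.
move=> a0 b0; rewrite /mymin; case: ifP => // /negbT hab.
by apply: ltW; rewrite real_ltNge ?gtr0_real.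
Qed.
Lemma mymin_r a b : mymin a b <= b.
Proof. by rewrite /mymin; case: ifP. Qed.
Lemma mymin_gt0 a b : 0 < a -> 0 < b -> 0 < mymin a b.
Proof. by rewrite /mymin; case: ifP. Qed.

Lemma baire_ex (E : nat -> B -> Prop) :
  (forall m b, ~ E m b -> exists s, 0 < s /\ forall x, `|x - b| < s -> ~ E m x) ->
  (forall b, exists m, E m b) ->
  exists m a r, 0 < r /\ forall x, `|x - a| < r -> E m x.
Proof.
move=> Eo cov; apply: contrapT => H.
have H' : forall m a r, 0 < r -> exists x, `|x - a| < r /\ ~ E m x.
  move=> m a r r0; apply: contrapT => hnot; apply: H; exists m, a, r; split => // x hx.
  by apply: contrapT => nE; apply: hnot; exists x; split.
pose P (q : nat * (B * K)) (q' : B * K) :=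
  0 < q.2.2 -> [/\ `|q'.1 - q.2.1| < q.2.2 / 2, 0 < q'.2, q'.2 <= q.2.2 / 2,
     q'.2 <= (q.1.+1%:R)^-1 & forall y, `|y - q'.1| < q'.2 + q'.2 -> ~ E q.1 y].
have exP : forall q, exists q', P q q'.
  case=> m [a r]; case: (boolP (0 < r)) => r0; last by exists (a, r) => /= h; move: r0; rewrite h.
  have r20 : 0 < r / 2 by rewrite divr_gt0.
  have [x [hx nE]] := H' m a (r / 2) r20.
  have [s [s0 hs]] := Eo m x nE.
  have s20 : 0 < s / 2 by rewrite divr_gt0.
  have m0 : 0 < (m.+1%:R : K)^-1 by rewrite invr_gt0.
  pose r' := mymin (mymin (r / 2) (m.+1%:R)^-1) (s / 2).
  have r'0 : 0 < r' by rewrite !mymin_gt0.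
  exists (x, r'); rewrite /P /= => _; split => //.
  - exact: (le_trans (mymin_l (mymin_gt0 r20 m0) s20) (mymin_l r20 m0)).
  - exact: (le_trans (mymin_l (mymin_gt0 r20 m0) s20) (mymin_r _ _)).
  - move=> y hy; apply: hs; apply: (lt_le_trans hy).
    have : r' <= s / 2 by apply: mymin_r.
    move=> h; apply: (le_trans (lerD h h)).
    by rewrite -mulrDl; have -> : (s + s) / 2 = s by field.
have [f hf] := choice exP.
pose u := fix u m := if m is m'.+1 then f (m', u m') else ((0 : B), (1 : K)).
pose x m := (u m).1. pose r m := (u m).2.
have rpos : forall m, 0 < r m.
  elim=> [|m IH]; first by rewrite /r /=.
  by have [] := hf (m, u m) IH.
have S m : [/\ `|x m.+1 - x m| < r m / 2, r m.+1 <= r m / 2,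
     r m.+1 <= (m.+1%:R)^-1 & forall y, `|y - x m.+1| < r m.+1 + r m.+1 -> ~ E m y].
  by have [] := hf (m, u m) (rpos m).
have chain : forall m k, `|x (m + k)%N - x m| <= r m - r (m + k)%N.
  move=> m; elim=> [|k IH]; first by rewrite addn0 !subrr normr0.
  have [h1 h2 _ _] := S (m + k)%N.
  rewrite addnS.
  have -> : x (m + k).+1 - x m = (x (m + k).+1 - x (m + k)%N) + (x (m + k)%N - x m).
    by rewrite addrA subrK.
  apply: (le_trans (ler_normD _ _)).
  apply: (le_trans (lerD (ltW h1) IH)).
  have -> : r (m + k)%N / 2 + (r m - r (m + k)%N) = r m - r (m + k)%N / 2.
    by field.
  by apply: lerB.
have cau : cauchy_ex (x @ \oo).
  move=> e e0; have [M hM] := archK e0; exists (x M.+1).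
  exists M.+1 => // n /= hn; rewrite -ball_normE /=.
  have [S1 S2 S3 S4] := S M.
  rewrite -(subnKC hn) distrC.
  apply: (le_lt_trans (chain _ _)).
  apply: (lt_le_trans _ (ltW (le_lt_trans S3 hM))).
  by rewrite ltrBlDr ltrDl.
have cv : cvg (x @ \oo) by apply: cauchy_cvg; apply: cauchy_exP.
set l := lim (x @ \oo).
have hl : forall e, 0 < e -> exists N, forall n, (N <= n)%N -> `|l - x n| < e.
  move=> e e0; have := (cvgrPdist_lt _ _).1 cv e e0.
  by case=> N _ HN; exists N => n hn; exact: HN.
have [m Eml] := cov l.
have [N hN] := hl _ (rpos m.+1).
have [_ _ _ S4] := S m.
apply: (S4 l) => //.
pose n := (m.+1 + N)%N.
have -> : l - x m.+1 = (l - x n) + (x n - x m.+1) by rewrite addrA subrK.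
apply: (le_lt_trans (ler_normD _ _)).
have h1 : `|l - x n| < r m.+1 by apply: hN; rewrite leq_addl.
have h2 : `|x n - x m.+1| <= r m.+1 - r n by apply: chain.
apply: (lt_le_trans (ltr_leD h1 h2)).
by rewrite lerD2l lerBlDr lerDl ltW.
Qed.

End MyBaire.
Lemma archR (R : realType) (e : R) : 0 < e -> exists M : nat, (M.+1%:R)^-1 < e.
Proof.
move=> e0; exists (Num.truncn (e^-1)).
have := truncnS_gt (e^-1).
rewrite -[e^-1]div1r -[_.+1%:R^-1]div1r ltr_pdivrMr // ltr_pdivrMr ?ltr0Sn //.
by rewrite mulrC.
Qed.

Lemma archF (R : realType) (b : bool) (e : scalarF R b) : 0 < e -> exists M : nat, (M.+1%:R)^-1 < e.
Proof.
move: e; case: b => /= e e0; last exact: archR.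
move: e0; case: e => a c; rewrite ltcE /= => /andP [/eqP c0 a0].
have [M hM] := archR a0; exists M.
subst c.
have -> : (M.+1%:R : R[i]%C)^-1 = ((M.+1%:R : R)^-1)%:C%C.
  by rewrite fmorphV rmorph_nat.
by rewrite complexr0 ltcR.
Qed.
Section Final.
Variables (K : numFieldType) (B : completeNormedModType K) (mul : B -> B -> B).
Hypotheses (mulDl : forall (k : K) x y z, mul (k *: x + y) z = k *: mul x z + mul y z)
  (mulDr : forall (k : K) x y z, mul x (k *: y + z) = k *: mul x y + mul x z)
  (mulA : forall x y z, mul x (mul y z) = mul (mul x y) z)
  (mulN : forall x y, `|mul x y| <= `|x| * `|y|)
  (archK : forall e : K, 0 < e -> exists M : nat, (M.+1%:R)^-1 < e).

Lemma bounded_index : (forall x, exists n, np mul x n = 0) ->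
  exists m, forall b, np mul b m = 0.
Proof.
move=> nil.
have Eo : forall m b, ~ (np mul b m = 0) ->
    exists s, 0 < s /\ forall x, `|x - b| < s -> ~ (np mul x m = 0).
  move=> m b /eqP nb; have [s [s0 hs]] := np_open mulDl mulDr mulN nb.
  by exists s; split => // x /hs /eqP.
have [m [a [r [r0 hE]]]] := baire_ex archK Eo nil.
exists m => b.
set be := `|b| + 1.
have be0 : 0 < be by rewrite ltr_wpDl.
set eps := r / (m.+2%:R * be).
have X0 : 0 < m.+2%:R * be by rewrite mulr_gt0 // ltr0Sn.
have eps0 : 0 < eps by rewrite divr_gt0.
pose t (i : 'I_m.+2) : K := eps * (i.+1)%:R.
have tinj : injective t.
  move=> i j /(mulfI (lt0r_neq0 eps0)) /eqP; rewrite eqr_nat eqSS => /eqP.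
  exact: val_inj.
have ht : forall i, (fun v : B => v = 0) (\sum_(l < m.+2) t i ^+ l *: coef mul a b m l).
  move=> i /=; rewrite -(expand mulDl mulDr); apply: hE.
  have -> : a + t i *: b - a = t i *: b by rewrite addrC addKr.
  rewrite normrZ ger0_norm; last by rewrite mulr_ge0 // ltW.
  have hr : r = eps * (m.+2%:R * be) by rewrite divfK // lt0r_neq0.
  rewrite hr /t -mulrA.
  have h1 : (i.+1%:R : K) * `|b| <= m.+2%:R * `|b|.
    by rewrite ler_wpM2r // ler_nat ltn_ord.
  have h2 : (m.+2%:R : K) * `|b| < m.+2%:R * be.
    by rewrite ltr_pM2l ?ltr0Sn // /be ltrDl.
  by rewrite ltr_pM2l //; apply: (le_lt_trans h1 h2).
have := extract (ideal0 mulDl mulDr) tinj ht (leqnn m.+1).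
by rewrite coef_top.
Qed.

End Final.

Lemma j_np (K : numFieldType) (A : normedModType K) (B : normedModType K)
  (mulA : A -> A -> A) (mulB : B -> B -> B) (j : A -> B) :
  (forall x y, j (mulA x y) = mulB (j x) (j y)) ->
  forall z p, j (np mulA z p) = np mulB (j z) p.
Proof. by move=> jm z; elim=> [//|p IH]; rewrite !npS jm IH. Qed.

Unset Implicit Arguments.
Theorem corollary1p5 (R : realType) (is_complex : bool)
  (A : normedModType (scalarF R is_complex)) (mulA : A -> A -> A)
  (B : completeNormedModType (scalarF R is_complex)) (mulB : B -> B -> B)
  (j : A -> B) :
  is_normed_algebra mulA -> is_PI mulA ->
  is_normed_algebra mulB -> is_completion mulA mulB j ->
  is_nil mulB -> is_nilpotent mulA.
Proof.
move=> [mAl mAr mAa mAn] _ [mBl mBr mBa mBn] [jlin jmul jnorm jdense] nilB.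
have [p hp] := bounded_index mBl mBr mBn (@archF R is_complex) nilB.
have hA : forall z, np mulA z p = 0.
  move=> z; apply/eqP; rewrite -normr_eq0 -jnorm.
  by rewrite (j_np jmul) hp normr0.
exists (Ln p).-1 => s hs.
apply: (NH mAl mAr mAa (I := fun v => v = 0)) => //.
  exact: ideal0.
by rewrite hs prednK // Ln_gt0.
Qed.
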